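(* Let the alphabet be countable, $\mathcal S$ the set of sentences, $\widehat{\mathcal I}$ the set of separating interpretations, and $\mu^*:\widehat{\mathcal B}\to\mathbb R$ a (countably additive) probability measure on the Borel $\sigma$-algebra $\widehat{\mathcal B}$ on $\widehat{\mathcal I}$. Define $\mu:\mathcal S\to\mathbb R$ by $\mu(\varphi)=\mu^*(\widehat{\mathrm{Mod}}(\varphi))$. Then $\mu$ is a Gaifman probability on sentences.
   Context: Setting: higher-order logic (Church's simple theory of types, without a description operator), with Henkin semantics: an interpretation $I$ consists of domains $D_\alpha$ ($D_o=\{\mathsf T,\mathsf F\}$, $D_{\alpha\to\beta}$ a set of functions) and a valuation of constants (equality denoting identity) such that every term has a denotation; $V(t,I)$ is the denotation of a closed term $t$. An alphabet is countable if its set of constants is countable. Sentences are closed terms of type $o$; a sentence is valid if true in every interpretation. $I$ is separating if for every pair $r,s$ of closed terms of the same function type $\alpha\to\beta$ with $V(r,I)\neq V(s,I)$ there is a closed term $t$ of type $\alpha$ (over the alphabet) with $V((r\,t),I)\neq V((s\,t),I)$. $\widehat{\mathrm{Mod}}(\varphi)=\{I\in\widehat{\mathcal I}:\varphi\text{ is valid in }I\}$; these sets form a basis of a topology on $\widehat{\mathcal I}$ and $\widehat{\mathcal B}$ is its Borel $\sigma$-algebra (for countable alphabet, the $\sigma$-algebra generated by the sets $\widehat{\mathrm{Mod}}(\varphi)$). A probability on sentences is a non-negative $\mu:\mathcal S\to\mathbb R$ with $\mu(\varphi)=1$ for valid $\varphi$ and $\mu(\varphi\vee\psi)=\mu(\varphi)+\mu(\psi)$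 whenever $\neg(\varphi\wedge\psi)$ is valid. $\mu$ is Gaifman if for every pair $r,s$ of closed terms of the same function type $\alpha\to\beta$, $\mu(r=s)=\inf_{\{t_1,\dots,t_n\}}\mu(\bigwedge_{i=1}^n((r\,t_i)=(s\,t_i)))$ over all finite sets of closed terms of type $\alpha$. *)

(* Defs.v *)
From HB Require Import structures.
From mathcomp Require Import all_boot all_order all_algebra.
From mathcomp Require Import boolp classical_sets reals topology normedtype sequences.
Set Implicit Arguments. Unset Strict Implicit. Unset Printing Implicit Defensive.
Import Order.TTheory GRing.Theory Num.Theory.
Import numFieldNormedType.Exports.
Local Open Scope classical_set_scope.
Local Open Scope ring_scope.

Inductive ty (B : Type) : Type :=
| TO : ty B
| TBase : B -> ty B
| TArr : ty B -> ty B -> ty B.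
Arguments TO {B}.

Record alphabet := Alphabet {
  base : Type;
  const : Type;
  ctype : const -> ty base
}.

Notation tyA A := (ty (base A)).

Inductive var (B : Type) : seq (ty B) -> ty B -> Type :=
| VZ (G : seq (ty B)) (a : ty B) : var (a :: G) a
| VS (G : seq (ty B)) (a b : ty B) : var G a -> var (b :: G) a.

Unset Implicit Arguments.
(* Intrinsically typed terms.  Equality (at every type) and the logical
   connectives/quantifier are logical constants with fixed meaning. *)
Inductive term (A : alphabet) (G : seq (tyA A)) : tyA A -> Type :=
| TVar (a : tyA A) : var G a -> term A G a
| TConst (c : const A) : term A G (ctype c)
| TApp (a b : tyA A) : term A G (TArr a b) -> term A G a -> term A G b
| TLam (a b : tyA A) : term A (a :: G) b -> term A G (TArr a b)
| TEq (a : tyA A) : term A G a -> term A G a -> term A G TO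
| TTrue : term A G TO
| TNot : term A G TO -> term A G TO
| TAnd : term A G TO -> term A G TO -> term A G TO
| TOr : term A G TO -> term A G TO -> term A G TO
| TForall (a : tyA A) : term A (a :: G) TO -> term A G TO.
Set Implicit Arguments.
Arguments TVar {A G a}.
Arguments TConst {A} G c.
Arguments TApp {A G a b}.
Arguments TLam {A G a b}.
Arguments TEq {A G a}.
Arguments TTrue {A G}.
Arguments TNot {A G}.
Arguments TAnd {A G}.
Arguments TOr {A G}.
Arguments TForall {A G a}.

Definition closed (A : alphabet) (a : tyA A) := term A [::] a.
Arguments closed : clear implicits.
Definition sentence (A : alphabet) := closed A TO.

Fixpoint bigAnd (A : alphabet) (G : seq (tyA A)) (s : seq (term A G TO)) : term A G TO :=
  match s with
  | [::] => TTrue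
  | [:: x] => x
  | x :: s' => TAnd x (bigAnd s')
  end.

Fixpoint envT (B : Type) (D : ty B -> Type) (G : seq (ty B)) : Type :=
  match G with
  | [::] => unit
  | a :: G' => (D a * envT D G')%type
  end.

Fixpoint lookup (B : Type) (D : ty B -> Type) (G : seq (ty B)) (a : ty B)
  (v : var G a) : envT D G -> D a :=
  match v in var G' a' return envT D G' -> D a' with
  | VZ _ _ => fun r => r.1
  | VS _ _ _ v' => fun r => lookup v' r.2
  end.

(* A Henkin interpretation: domains D_alpha, with D_o a two-element set
   (identified with bool via the bijection [tv]), D_(a->b) a set of functions
   from D_a to D_b (application [app], extensional), nonempty base domains,
   values of constants, and a denotation for every term (w.r.t. every
   assignment of the free variables) satisfying the usual equations. *)
Record interp (A : alphabet) := Interp {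
  dom : tyA A -> Type;
  tv : dom TO -> bool;
  tv_bij : bijective tv;
  app : forall a b, dom (TArr a b) -> dom a -> dom b;
  app_ext : forall a b (f g : dom (TArr a b)), (forall x, app f x = app g x) -> f = g;
  base_inh : forall i : base A, inhabited (dom (TBase i));
  cval : forall c : const A, dom (ctype c);
  den : forall G a, term A G a -> envT dom G -> dom a;
  den_var : forall G a (v : var G a) r, den (TVar v) r = lookup v r;
  den_const : forall G c r, den (TConst G c) r = cval c;
  den_app : forall G a b (t : term A G (TArr a b)) (u : term A G a) r,
      den (TApp t u) r = app (den t r) (den u r);
  den_lam : forall G a b (t : term A (a :: G) b) r (d : dom a),
      app (den (TLam t) r) d = den t (d, r);
  den_eq : forall G a (t u : term A G a) r,
      tv (den (TEq t u) r) = true <-> den t r = den u r;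
  den_true : forall (G : seq (tyA A)) r, tv (den (@TTrue A G) r) = true;
  den_not : forall G (t : term A G TO) r, tv (den (TNot t) r) = ~~ tv (den t r);
  den_and : forall G (t u : term A G TO) r,
      tv (den (TAnd t u) r) = tv (den t r) && tv (den u r);
  den_or : forall G (t u : term A G TO) r,
      tv (den (TOr t u) r) = tv (den t r) || tv (den u r);
  den_forall : forall G a (t : term A (a :: G) TO) r,
      tv (den (TForall t) r) = true <-> forall d : dom a, tv (den t (d, r)) = true
}.

Arguments dom {A} _ _.
Arguments tv {A} _ _.
Arguments app {A} _ {a b}.
Arguments cval {A} _ c.
Arguments den {A} _ {G a}.

Definition V (A : alphabet) (I : interp A) (a : tyA A) (t : closed A a) : dom I a :=
  den I t tt.

Definition valid_in (A : alphabet) (I : interp A) (phi : sentence A) : Prop :=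
  tv I (V I phi) = true.

Definition valid (A : alphabet) (phi : sentence A) : Prop :=
  forall I : interp A, valid_in I phi.

Definition separating (A : alphabet) (I : interp A) : Prop :=
  forall (a b : tyA A) (r s : closed A (TArr a b)),
    V I r <> V I s -> exists t : closed A a, V I (TApp r t) <> V I (TApp s t).

Definition countable_alphabet (A : alphabet) : Prop :=
  exists f : const A -> nat, injective f.

Definition Ihat (A : alphabet) := {I : interp A | separating I}.

Definition Mod (A : alphabet) (phi : sentence A) : set (Ihat A) :=
  [set I | valid_in (proj1_sig I) phi].

Arguments Ihat : clear implicits.

Definition is_sigma_algebra (T : Type) (S : set (set T)) : Prop :=
  [/\ S setT,
      (forall X, S X -> S (~` X)) &
      (forall F : nat -> set T, (forall n, S (F n)) -> S (\bigcup_n F n))].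

Definition gen_sigma (T : Type) (G : set (set T)) : set (set T) :=
  fun X => forall S, is_sigma_algebra S -> G `<=` S -> S X.

(* Borel sigma-algebra on \hat I (countable alphabet): generated by the Mod sets *)
Definition Bhat (A : alphabet) : set (set (Ihat A)) :=
  gen_sigma [set Mod phi | phi in [set: sentence A]].

Arguments Bhat : clear implicits.

Definition prob_measure (R : realType) (T : Type) (M : set (set T)) (m : set T -> R) : Prop :=
  [/\ forall X, M X -> 0 <= m X,
      m setT = 1 &
      forall F : nat -> set T, (forall n, M (F n)) ->
        (forall i j, i <> j -> F i `&` F j = set0) ->
        (fun n => \sum_(i < n) m (F i)) @ \oo --> m (\bigcup_n F n)].

Definition prob_sent (R : realType) (A : alphabet) (mu : sentence A -> R) : Prop :=
  [/\ forall phi, 0 <= mu phi,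
      forall phi, valid phi -> mu phi = 1 &
      forall phi psi, valid (TNot (TAnd phi psi)) -> mu (TOr phi psi) = mu phi + mu psi].

Definition gaifman (R : realType) (A : alphabet) (mu : sentence A -> R) : Prop :=
  prob_sent mu /\
  forall (a b : tyA A) (r s : closed A (TArr a b)),
    mu (TEq r s) =
    inf [set mu (bigAnd [seq TEq (TApp r t) (TApp s t) | t <- ts])
        | ts in [set: seq (closed A a)]].

(* Main.v *)
Require Import Defs.
From HB Require Import structures.
From mathcomp Require Import all_boot all_order all_algebra.
From mathcomp Require Import boolp classical_sets reals topology normedtype sequences.
From Stdlib Require Import Program.Equality Eqdep.
From Stdlib Require Lists.List.
Import Order.TTheory GRing.Theory Num.Theory.
Import numFieldNormedType.Exports.
Local Open Scope classical_set_scope.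
Local Open Scope ring_scope.
Set Implicit Arguments. Unset Strict Implicit. Unset Printing Implicit Defensive.

Section Enc.
Variable A : alphabet.
Variable fc : const A -> nat.
Hypothesis fc_inj : injective fc.
Variable fb : base A -> nat.
Hypothesis fb_inj : injective fb.

Fixpoint enc_ty (x : tyA A) : GenTree.tree nat :=
  match x with
  | TO => GenTree.Node 0 [::]
  | TBase i => GenTree.Node 1 [:: GenTree.Leaf (fb i)]
  | TArr x y => GenTree.Node 2 [:: enc_ty x; enc_ty y]
  end.

Lemma enc_ty_inj : injective enc_ty.
Proof.
elim=> [|i|x IHx y IHy] [|j|x' y'] //=; try discriminate.
- by case=> /fb_inj ->.
- by case=> /IHx -> /IHy ->.
Qed.

Fixpoint enc_var (G : seq (tyA A)) (a : tyA A) (v : var G a) : nat :=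
  match v with
  | VZ _ _ => 0
  | VS _ _ _ v' => (enc_var v').+1
  end.

Lemma enc_var_inj G a (v1 v2 : var G a) : enc_var v1 = enc_var v2 -> v1 = v2.
Proof.
induction v1; dependent destruction v2; simpl; try discriminate; auto.
move=> [] /IHv1 ->; reflexivity.
Qed.

Fixpoint enc (G : seq (tyA A)) (a : tyA A) (t : term A G a) : GenTree.tree nat :=
  match t with
  | TVar a v => GenTree.Node 0 [:: enc_ty a; GenTree.Leaf (enc_var v)]
  | TConst c => GenTree.Node 1 [:: GenTree.Leaf (fc c)]
  | TApp a b t u => GenTree.Node 2 [:: enc_ty a; enc t; enc u]
  | TLam a b t => GenTree.Node 3 [:: enc_ty a; enc t]
  | TEq a t u => GenTree.Node 4 [:: enc_ty a; enc t; enc u]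
  | TTrue => GenTree.Node 5 [::]
  | TNot t => GenTree.Node 6 [:: enc t]
  | TAnd t u => GenTree.Node 7 [:: enc t; enc u]
  | TOr t u => GenTree.Node 8 [:: enc t; enc u]
  | TForall a t => GenTree.Node 9 [:: enc_ty a; enc t]
  end.

Lemma enc_injS G a1 (t1 : term A G a1) a2 (t2 : term A G a2) :
  enc t1 = enc t2 -> existT (term A G) a1 t1 = existT _ a2 t2.
Proof.
revert a2 t2.
induction t1; intros a2 t2; destruct t2; simpl; try discriminate.
- case=> /enc_ty_inj E; subst. move=> /enc_var_inj ->. reflexivity.
- case=> /fc_inj ->. reflexivity.
- case=> /enc_ty_inj E; subst. move=> /IHt1_1 H1 /IHt1_2 H2.
  have Eb := f_equal (@projT1 _ _) H1. simpl in Eb. case: Eb => Eb; subst.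
  apply inj_pair2 in H1; apply inj_pair2 in H2; subst; reflexivity.
- case=> /enc_ty_inj E; subst. move=> /IHt1 H1.
  have Eb := f_equal (@projT1 _ _) H1. simpl in Eb. subst.
  apply inj_pair2 in H1; subst; reflexivity.
- case=> /enc_ty_inj E; subst. move=> /IHt1_1 H1 /IHt1_2 H2.
  apply inj_pair2 in H1; apply inj_pair2 in H2; subst; reflexivity.
- reflexivity.
- case=> /IHt1 H1. apply inj_pair2 in H1; subst; reflexivity.
- case=> /IHt1_1 H1 /IHt1_2 H2.
  apply inj_pair2 in H1; apply inj_pair2 in H2; subst; reflexivity.
- case=> /IHt1_1 H1 /IHt1_2 H2.
  apply inj_pair2 in H1; apply inj_pair2 in H2; subst; reflexivity.
- case=> /enc_ty_inj E; subst. move=> /IHt1 H1.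
  apply inj_pair2 in H1; subst; reflexivity.
Qed.

Lemma enc_inj G a : injective (@enc G a).
Proof. move=> t1 t2 H; exact: (inj_pair2 _ _ _ _ _ (enc_injS H)). Qed.

End Enc.
Section Sig.
Local Open Scope classical_set_scope.
Variables (T : Type) (G : set (set T)).
Lemma gen_sigma_sa : is_sigma_algebra (gen_sigma G).
Proof.
split.
- by move=> S [].
- by move=> X HX S hS HG; case: (hS) => _ hC _; apply: hC; exact: HX.
- by move=> F HF S hS HG; case: (hS) => _ _ hU; apply: hU => n; exact: HF.
Qed.
Lemma gen_sigma_sub : G `<=` gen_sigma G.
Proof. by move=> X GX S _ HG; exact: HG. Qed.
End Sig.

Lemma limR (R : realType) (f : nat -> R) (l : R) :
  f n @[n --> \oo] --> l -> lim (f n @[n --> \oo]) = l.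
Proof. by move=> h; apply: cvg_lim => //; exact: norm_hausdorff. Qed.

Section Meas.
Local Open Scope classical_set_scope.
Local Open Scope ring_scope.
Variables (R : realType) (T : Type) (M : set (set T)) (m : set T -> R).
Hypothesis hM : is_sigma_algebra M.
Hypothesis hm : prob_measure M m.

Lemma MT : M setT. Proof. by case: hM. Qed.
Lemma MC X : M X -> M (~` X). Proof. by case: hM => _ h _; apply: h. Qed.
Lemma M0 : M set0. Proof. by rewrite -setCT; apply: MC; exact: MT. Qed.

Definition pad (X Y : set T) (n : nat) : set T :=
  if n == 0%N then X else if n == 1%N then Y else set0.

Lemma bigcup_pad X Y : \bigcup_n pad X Y n = X `|` Y.
Proof.
apply/seteqP; split.
- move=> x [n _]; rewrite /pad; case: (n == 0%N); first by left.
  by case: (n == 1%N) => //; right.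
- move=> x [hx|hx]; first by exists 0%N.
  by exists 1%N.
Qed.

Lemma MU X Y : M X -> M Y -> M (X `|` Y).
Proof.
move=> hX hY; rewrite -bigcup_pad; case: hM => _ _ h; apply: h => n.
rewrite /pad; case: (n == 0%N) => //; case: (n == 1%N) => //; exact: M0.
Qed.

Lemma MI X Y : M X -> M Y -> M (X `&` Y).
Proof.
move=> hX hY; rewrite -[X `&` Y]setCK setCI; apply: MC; apply: MU; exact: MC.
Qed.

Lemma m0 : m set0 = 0.
Proof.
case: hm => _ _ h.
have := h (fun _ => set0) (fun _ => M0) (fun _ _ _ => setI0 _).
set c := m set0.
set u := (fun n => \sum_(i < n) c).
move=> cu.
have cu' : u n.+1 @[n --> \oo] --> m (\bigcup_(n : nat) (@set0 T)).
  exact (eq_rect_r (fun X : Prop => X) cu (cvg_shiftS u (nbhs (m (\bigcup_(n : nat) (set0 : set T)))))).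
have E : (fun n => u n.+1) = (fun n => u n + c).
  by apply: funext => n; rewrite /u big_ord_recr.
rewrite E in cu'.
have cu2 : u n + c @[n --> \oo] --> m (\bigcup_(n : nat) (@set0 T)) + c.
  by apply: cvgD; [exact: cu | exact: cvg_cst].
have := limR cu'. rewrite (limR cu2).
move=> H; apply: (addrI (m (\bigcup_(n : nat) (@set0 T)))); by rewrite addr0.
Qed.

Lemma madd X Y : M X -> M Y -> X `&` Y = set0 -> m (X `|` Y) = m X + m Y.
Proof.
move=> hX hY hXY; case: hm => _ _ h.
have hF : forall n, M (pad X Y n).
  by move=> n; rewrite /pad; case: (n == 0%N) => //; case: (n == 1%N) => //; exact: M0.
have hD : forall i j, i <> j -> pad X Y i `&` pad X Y j = set0.
  move=> [|[|i]] [|[|j]] //= _; rewrite /pad /=;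
   rewrite ?set0I ?setI0 //; by rewrite setIC.
have := h _ hF hD; rewrite bigcup_pad => cu.

have cu' : \sum_(i < n.+2) m (pad X Y i) @[n --> \oo] --> m (X `|` Y).
  by move: cu; rewrite -(cvg_shiftS (fun n => \sum_(i < n) m (pad X Y i))) -(cvg_shiftS (fun n => \sum_(i < n.+1) m (pad X Y i))).
suff E : (fun n => \sum_(i < n.+2) m (pad X Y i)) = (fun _ => m X + m Y).
  rewrite E in cu'.
  have h2 : m X + m Y @[n --> \oo] --> m X + m Y by exact: cvg_cst.
  by rewrite -(limR cu') (limR h2).
apply: funext => n; rewrite !big_ord_recl /= big1 ?addr0 ?addrA //.
by move=> i _; rewrite /pad /= m0.
Qed.

Lemma mC X : M X -> m (~` X) = 1 - m X.
Proof.
move=> hX; case: (hm) => _ h1 _.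
have := madd hX (MC hX) (setICr X); rewrite setUCr h1 => ->.
by rewrite addrAC subrr add0r.
Qed.

Lemma mle X Y : M X -> M Y -> X `<=` Y -> m X <= m Y.
Proof.
move=> hX hY hXY.
have E : Y = X `|` (Y `&` ~` X).
  apply/seteqP; split=> x.
  - by move=> hy; case: (pselect (X x)) => hx; [left | right].
  - by case=> [/hXY|[]].
have hZ : M (Y `&` ~` X) by apply: MI => //; exact: MC.
have hd : X `&` (Y `&` ~` X) = set0 by rewrite setIA (setIC X) -setIA setICr setI0.
rewrite E (madd hX hZ hd).
case: (hm) => h0 _ _; rewrite lerDl; exact: h0.
Qed.

Lemma mdecr (B : nat -> set T) : (forall n, M (B n)) -> B 0%N = setT ->
  (forall n, B n.+1 `<=` B n) ->
  (fun n => m (B n)) @ \oo --> m (\bigcap_n B n).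
Proof.
move=> hB B0 hdec.
have mono : forall i j, (i <= j)%N -> B j `<=` B i.
  move=> i j /subnK <-; elim: (j - i)%N => [|k IH] //=.
  by rewrite addSn; apply: subset_trans (hdec _) IH.
set Gk := fun k => B k `&` ~` B k.+1.
have hG : forall k, M (Gk k) by move=> k; apply: MI => //; apply: MC.
have hD : forall i j, i <> j -> Gk i `&` Gk j = set0.
  suff H : forall i j, (i < j)%N -> Gk i `&` Gk j = set0.
    move=> i j /eqP; rewrite neq_ltn => /orP [/H //| /H]; by rewrite setIC.
  move=> i j lij; apply/seteqP; split => // x [[_ hi] [hj _]].
  by apply: hi; apply: (mono _ _ lij).
case: (hm) => _ h1 h.
have := h _ hG hD.
have Bcap : M (\bigcap_n B n).
  rewrite -[X in M X]setCK setC_bigcap; apply: MC.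
  case: hM => _ _ hU; apply: hU => n; exact: MC.
have EU : \bigcup_k Gk k = ~` \bigcap_n B n.
  apply/seteqP; split.
  - by move=> x [k _ [_ hk]] hall; apply: hk; apply: hall.
  - move=> x /= hx.
    have [N hN] : exists N, ~ B N x.
      apply: contrapT => hn; apply: hx => n _; apply: contrapT => hb; apply: hn; by exists n.
    suff : exists k, B k x /\ ~ B k.+1 x by move=> [k [h1' h2']]; exists k.
    elim: N hN => [|N IH] hN; first by exfalso; apply: hN; rewrite B0.
    case: (pselect (B N x)) => hb; first by exists N.
    exact: IH.
rewrite EU (mC Bcap) => cu.
have Es : forall n, \sum_(i < n) m (Gk i) = 1 - m (B n).
  elim=> [|n IH]; first by rewrite big_ord0 B0 h1 subrr.
  rewrite big_ord_recr /= IH.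
  have E : B n = B n.+1 `|` Gk n.
    apply/seteqP; split=> x.
    - by move=> hx; case: (pselect (B n.+1 x)) => hx'; [left|right].
    - by case=> [/hdec|[]].
  have : m (B n) = m (B n.+1) + m (Gk n).
    rewrite {1}E (madd (hB _) (hG _)) //.
    by rewrite /Gk setIA (setIC (B n.+1)) -setIA setICr setI0.
  move=> ->; by rewrite opprD addrA addrNK.
have cu2 : 1 - \sum_(i < n) m (Gk i) @[n --> \oo] --> 1 - (1 - m (\bigcap_n B n)).
  exact: cvgB (cvg_cst _) cu.
rewrite opprB addrC addrNK in cu2.
suff -> : (fun n => m (B n)) = (fun n => 1 - \sum_(i < n) m (Gk i)) by [].
by apply: funext => n; rewrite Es opprB addrC addrNK.
Qed.
End Meas.

Section Sem.
Variable A : alphabet.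
Implicit Types (I : interp A).

Lemma vi_eq I a (t u : Defs.closed A a) : valid_in I (TEq t u) <-> V I t = V I u.
Proof. exact: den_eq. Qed.

Lemma V_app I a b (r : Defs.closed A (TArr a b)) (t : Defs.closed A a) :
  V I (TApp r t) = app I (V I r) (V I t).
Proof. exact: den_app. Qed.

Lemma vi_true I : valid_in I TTrue.
Proof. exact: den_true. Qed.

Lemma vi_bigAnd I (l : seq (sentence A)) :
  valid_in I (bigAnd l) <-> (forall x, Stdlib.Lists.List.In x l -> valid_in I x).
Proof.
elim: l => [|x [|y l] IH].
- by split=> // _; exact: vi_true.
- split; first by move=> h z [<-|[]].
  by move=> h; apply: h; left.
- rewrite /valid_in /V /= den_and.
  rewrite /valid_in /V /= in IH.
  split.
  + move/andP=> [hx hr] z [<-|hz] //; exact: (proj1 IH hr).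
  + move=> h; apply/andP; split; first by apply: h; left.
    by apply: (proj2 IH) => z hz; apply: h; right.
Qed.

Fixpoint tsq (X : Type) (d : nat -> option X) (n : nat) : seq X :=
  match n with
  | 0 => [::]
  | n.+1 => match d n with Some t => t :: tsq d n | None => tsq d n end
  end.

Lemma tsq_mono X (d : nat -> option X) n t : Stdlib.Lists.List.In t (tsq d n) -> Stdlib.Lists.List.In t (tsq d n.+1).
Proof. by rewrite /=; case: (d n) => // y h; right. Qed.

Lemma tsq_hit X (d : nat -> option X) k t : d k = Some t -> Stdlib.Lists.List.In t (tsq d k.+1).
Proof. by move=> /= ->; left. Qed.

End Sem.

Theorem mainTheorem12 (R : realType) (A : alphabet)
  (hcountC : countable_alphabet A)
  (hcountB : exists f : base A -> nat, injective f)
  (mustar : set (Ihat A) -> R)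
  (hmu : prob_measure (Bhat A) mustar) :
  gaifman (fun phi : sentence A => mustar (Mod phi)).
Proof.
have hs : is_sigma_algebra (Bhat A) by exact: gen_sigma_sa.
have hMod : forall phi : sentence A, Bhat A (Mod phi).
  by move=> phi; apply: gen_sigma_sub; exists phi.
case: (hmu) => h0 h1 _.
split.
  split.
  - by move=> phi; apply: h0.
  - move=> phi hv.
    suff -> : Mod phi = setT by [].
    by apply/seteqP; split=> // [[I hI]] _; exact: hv.
  - move=> phi psi hv.
    have EU : Mod (TOr phi psi) = Mod phi `|` Mod psi.
      apply/seteqP; split=> -[I hI]; rewrite /Mod /valid_in /V /= den_or.
      + by move=> /orP [h|h]; [left|right].
      + by case=> h; apply/orP; [left|right].
    have ED : Mod phi `&` Mod psi = set0.
      apply/seteqP; split; last by []. move=> [I hI]; rewrite /Mod /valid_in /V /=.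
      move=> [ha hb]; have := hv I; rewrite /valid_in /V /= den_not den_and.
      by rewrite ha hb.
    by rewrite EU (madd hs hmu (hMod _) (hMod _) ED).
move=> a b r s.
case: hcountC => fc fc_inj; case: hcountB => fb fb_inj.
pose enc' := fun t : Defs.closed A a => pickle (enc fc fb t).
have enc'_inj : injective enc'.
  by move=> t1 t2 /(pcan_inj pickleK_inv) /(enc_inj fc_inj fb_inj).
pose d := fun n => match pselect (exists t, enc' t = n) with
                   | left h => Some (proj1_sig (cid h))
                   | right _ => None end.
have d_enc : forall t, d (enc' t) = Some t.
  move=> t; rewrite /d; case: pselect => [h|h]; last by exfalso; apply: h; exists t.
  by congr Some; apply: enc'_inj; exact: (proj2_sig (cid h)).
pose f := fun t : Defs.closed A a => TEq (TApp r t) (TApp s t).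
pose P := fun (x : Ihat A) (t : Defs.closed A a) => V (proj1_sig x) (TApp r t) = V (proj1_sig x) (TApp s t).
have ModL : forall ts, Mod (bigAnd [seq f t | t <- ts]) = [set x | forall t, Stdlib.Lists.List.In t ts -> P x t].
  move=> ts; apply/seteqP; split=> x; rewrite /Mod /= vi_bigAnd.
  - move=> h t ht; apply/vi_eq; apply: h; apply/Stdlib.Lists.List.in_map_iff; by exists t.
  - move=> h y /Stdlib.Lists.List.in_map_iff [t [<- ht]]; apply/vi_eq; exact: h.
have ModE : Mod (TEq r s) = [set x | forall t, P x t].
  apply/seteqP; split=> -[I hI]; rewrite /Mod /P /= vi_eq.
  - by move=> E t; rewrite !V_app E.
  - move=> h; apply: contrapT => hne; case: (hI _ _ _ _ hne) => t; exact.
pose B := fun n => Mod (bigAnd [seq f t | t <- tsq d n]).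
have hBm : forall n, Bhat A (B n) by move=> n; exact: hMod.
have hB0 : B 0%N = setT.
  by rewrite /B ModL; apply/seteqP; split=> // x _ t [].
have hBd : forall n, B n.+1 `<=` B n.
  by move=> n x; rewrite /B !ModL => h t ht; apply: h; exact: tsq_mono.
have Bcap : \bigcap_n B n = Mod (TEq r s).
  rewrite ModE; apply/seteqP; split=> x.
  - move=> h t; have := h (enc' t).+1 I; rewrite /B ModL; apply.
    by apply: tsq_hit; exact: d_enc.
  - by move=> h n _; rewrite /B ModL => t _; exact: h.
have cv := mdecr hs hmu hBm hB0 hBd.
rewrite Bcap in cv.
set S := [set _ | _ in _].
have hlb : has_lbound S.
  by exists 0 => y [ts _ <-]; exact: h0.
have LS : forall ts, mustar (Mod (TEq r s)) <= mustar (Mod (bigAnd [seq f t | t <- ts])).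
  move=> ts; apply: (mle hs hmu (hMod _) (hMod _)).
  by rewrite ModL ModE => x h t _; exact: h.
apply/eqP; rewrite eq_le; apply/andP; split.
- apply: lb_le_inf; first by exists (mustar (Mod (bigAnd [seq f t | t <- [::]]))); exists [::].
  by move=> y [ts _ <-]; exact: LS.
- apply: (cvgr_to_ge cv); apply: nearW => n.
  by apply: ge_inf => //; exists (tsq d n).
Qed.
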